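(* Let $q$ be a query with sensitivity $\Delta q>0$, let $0\le a<c$, and let the random scale $b$ be such that $1/b$ is uniformly distributed on $[a,c]$. Then the R$^2$DP Laplace mechanism $\mathcal M_q(d,b)=q(d)+\mathrm{Lap}(b)$ is $$\ln\left[\frac{\alpha^2-\beta^2}{2\big((1+\beta)e^{-\beta}-(1+\alpha)e^{-\alpha}\big)}\right]\text{-differentially private},$$ where $\alpha=a\,\Delta q$ and $\beta=c\,\Delta q$.
   Context: $\mathrm{Lap}(b)$ is the zero-mean Laplace distribution with density $\frac{1}{2b}e^{-|x|/b}$; the R$^2$DP Laplace mechanism draws the random scale $b$ (independently of the data) and then adds $\mathrm{Lap}(b)$ noise to $q(d)$. $\Delta q=\max|q(d)-q(d')|$ over datasets $d,d'$ differing in one individual's data. A mechanism is $\epsilon$-differentially private if $\mathbb P(\mathcal M(d)\in S)\le e^\epsilon\mathbb P(\mathcal M(d')\in S)$ for all such $d,d'$ and measurable $S$. *)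

(* Defs.v *)
From HB Require Import structures.
From mathcomp Require Import all_boot all_order all_algebra.
From mathcomp Require Import all_classical all_reals all_analysis.
Set Implicit Arguments. Unset Strict Implicit. Unset Printing Implicit Defensive.
Import Order.TTheory GRing.Theory Num.Theory.
Local Open Scope classical_set_scope.
Local Open Scope ring_scope.

Definition laplace_pdf (R : realType) (b x : R) : R :=
  (2 * b)^-1 * expR (- (`|x| / b)).

Definition laplace_shift_prob (R : realType) (b m : R) (S : set R) : \bar R :=
  (\int[@lebesgue_measure R]_(x in S) (laplace_pdf b (x - m))%:E)%E.

(* R^2DP Laplace mechanism with random scale b such that 1/b ~ Uniform[a,c],
   b independent of the data and the Laplace noise drawn given b:
   P(M_q(d,b) \in S) = E_{s ~ U[a,c]} [ P(q d + Lap(1/s) \in S) ]. *)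
Definition r2dp_uniform_laplace_prob (R : realType) (a c : R) (ac : a < c)
  (D : Type) (q : D -> R) (d : D) (S : set R) : \bar R :=
  (\int[uniform_prob ac]_s laplace_shift_prob s^-1 (q d) S)%E.

Definition is_sensitivity (R : realType) (D : Type) (nbr : D -> D -> Prop)
  (q : D -> R) (dq : R) : Prop :=
  (forall d d', nbr d d' -> `|q d - q d'| <= dq) /\
  (exists d d', nbr d d' /\ `|q d - q d'| = dq).

Definition differentially_private (R : realType) (D : Type)
  (nbr : D -> D -> Prop) (eps : R) (M : D -> set R -> \bar R) : Prop :=
  forall d d', nbr d d' -> forall S : set R, measurable S ->
    (M d S <= (expR eps)%:E * M d' S)%E.

(* Main.v *)
Require Import Defs.
From HB Require Import structures.
From mathcomp Require Import all_boot all_order all_algebra.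
From mathcomp Require Import all_classical all_reals all_analysis.
From mathcomp Require Import measurable_realfun.
From mathcomp Require Import ring lra.
Import Order.TTheory GRing.Theory Num.Theory.
Import numFieldNormedType.Exports.
Local Open Scope classical_set_scope.
Local Open Scope ring_scope.

Section Aux.
Context {R : realType}.
Local Notation mu := (@lebesgue_measure R).

Definition pq (s t : R) : R := s / 2 * expR (- (s * t)).

Lemma pdfE (s y : R) : laplace_pdf s^-1 y = pq s `|y|.
Proof.
rewrite /laplace_pdf /pq; congr (_ * expR (- _)).
  by rewrite invfM invrK mulrC.
by rewrite invrK mulrC.
Qed.

Lemma pq_ge0 s t : 0 <= s -> 0 <= pq s t.
Proof. by move=> s0; rewrite /pq mulr_ge0 ?expR_ge0 ?divr_ge0. Qed.

Lemma mjoint (m : R) : 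
  measurable_fun setT (fun z : R * R => pq z.1 `|z.2 - m|).
Proof.
rewrite /pq; apply: measurable_funM.
  by apply: measurable_funM => //; exact: measurable_fst.
apply: measurableT_comp; first exact: measurable_expR.
apply: measurableT_comp; first exact: oppr_measurable.
apply: measurable_funM; first exact: measurable_fst.
apply: measurableT_comp; first exact: normr_measurable.
apply: measurable_funB => //; exact: measurable_snd.
Qed.

Lemma mjointI (m : R) (A B : set R) : measurable A -> measurable B ->
 measurable_fun setT (fun z : R * R => \1_A z.1 * \1_B z.2 * pq z.1 `|z.2 - m|).
Proof.
move=> mA mB; apply: measurable_funM; last exact: mjoint.
apply: measurable_funM.
  by apply: measurableT_comp; [exact: measurable_indic|exact: measurable_fst].
by apply: measurableT_comp; [exact: measurable_indic|exact: measurable_snd].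
Qed.

Lemma param_meas (k : R * R -> R) (S : set R) : measurable S ->
  measurable_fun setT k ->
  measurable_fun setT (fun s => (\int[mu]_(x in S) (k (s, x))%:E)%E).
Proof.
move=> mS mk.
have -> : (fun s => (\int[mu]_(x in S) (k (s, x))%:E)%E) =
  ((fubini_F mu (fun z => ((Num.max (k z) 0) * \1_S z.2)%:E)) \-
   (fubini_F mu (fun z => ((Num.max (- k z) 0) * \1_S z.2)%:E)))%E.
  apply/funext => s; rewrite integralE /fubini_F /=.
  congr (_ - _)%E; rewrite integral_mkcond; apply: eq_integral => x _;
    rewrite patchE ?funeposE ?funenegE indicE /=; case: ifPn => xS;
    by rewrite ?mulr1 ?mulr0 // -?EFinN -EFin_max.
have mS2 : measurable_fun setT (fun z : R * R => \1_S z.2 : R).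
  by apply: measurableT_comp; [exact: measurable_indic|exact: measurable_snd].
apply: emeasurable_funB; apply: measurable_fun_fubini_tonelli_F.
- apply/measurable_EFinP; apply: measurable_funM => //.
  exact: measurable_maxr.
- by move=> z; rewrite lee_fin mulr_ge0 // ?le_max ?lexx ?orbT.
- apply/measurable_EFinP; apply: measurable_funM => //.
  apply: measurable_maxr => //; exact: measurableT_comp.
- by move=> z; rewrite lee_fin mulr_ge0 // ?le_max ?lexx ?orbT.
Qed.

Lemma unif_int (a c : R) (ac : a < c) (F : R -> \bar R) :
  measurable_fun setT F -> (forall s, a <= s <= c -> (0 <= F s)%E) ->
  (\int[uniform_prob ac]_s F s =
   ((c - a)^-1)%:E * \int[mu]_(s in `[a, c]) F s)%E.
Proof.
move=> mF F0.
have mFp : measurable_fun setT (F \_ `[a, c]).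
  by apply/(measurable_restrictT _ _).1 => //; exact: measurable_funS mF.
transitivity (\int[uniform_prob ac]_s (F \_ `[a, c]) s)%E.
  apply: ae_eq_integral => //.
  exists (~` `[a, c]); split.
  + exact: measurableC.
  + rewrite /uniform_prob /=; apply: integral0_eq => x /= xn.
    by rewrite /uniform_pdf; case: ifPn => // xac; exfalso; apply: xn.
  + move=> x /= H xac; apply: H => _.
    by rewrite patchE mem_set.
rewrite integral_uniform //; last first.
  move=> s; rewrite patchE; case: ifPn => // /set_mem /=.
  by rewrite in_itv /= => /F0.
congr (_ * _)%E; apply: eq_integral => s sI.
by rewrite patchE sI.
Qed.

Lemma swap_int (m a c : R) (S : set R) : measurable S -> 0 <= a ->
  (\int[mu]_(s in `[a, c]) \int[mu]_(x in S) (pq s `|x - m|)%:E =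
   \int[mu]_(x in S) \int[mu]_(s in `[a, c]) (pq s `|x - m|)%:E)%E.
Proof.
move=> mS a0.
pose f := ((fun z : R * R => (\1_`[a, c] z.1 * \1_S z.2 * pq z.1 `|z.2 - m|)%:E) :
  measurableTypeR R * measurableTypeR R -> \bar R).
have mf : measurable_fun setT f.
  apply/measurable_EFinP; apply: measurable_funM.
    apply: measurable_funM.
      by apply: measurableT_comp; [exact: measurable_indic|exact: measurable_fst].
    by apply: measurableT_comp; [exact: measurable_indic|exact: measurable_snd].
  rewrite /pq; apply: measurable_funM.
    by apply: measurable_funM => //; exact: measurable_fst.
  apply: measurableT_comp; first exact: measurable_expR.
  apply: measurableT_comp; first exact: oppr_measurable.
  apply: measurable_funM; first exact: measurable_fst.
  apply: measurableT_comp; first exact: normr_measurable.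
  apply: measurable_funB => //; exact: measurable_snd.
have f0 : forall z, (0 <= f z)%E.
  move=> [s x]; rewrite /f /= lee_fin !indicE.
  case: (boolP (s \in _)) => sI; last by rewrite !mul0r.
  rewrite mul1r mulr_ge0 //; apply: pq_ge0.
  move/set_mem: sI; rewrite /= in_itv /= => /andP[+ _].
  exact: le_trans.
transitivity (\int[mu]_s \int[mu]_x f (s, x))%E.
  rewrite integral_mkcond; apply: eq_integral => s _; rewrite patchE.
  case: ifPn => sI.
    rewrite integral_mkcond; apply: eq_integral => x _; rewrite patchE /f /=.
    rewrite !indicE sI mul1r; case: ifPn => xS; by rewrite ?mul1r ?mul0r.
  by rewrite integral0_eq // => x _; rewrite /f /= indicE (negbTE sI) !mul0r.
transitivity (\int[mu]_x \int[mu]_s f (s, x))%E; first exact: (fubini_tonelli f mf f0).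
symmetry; rewrite integral_mkcond; apply: eq_integral => x _; rewrite patchE.
case: ifPn => xS.
  rewrite integral_mkcond; apply: eq_integral => s _; rewrite patchE /f /=.
  rewrite !indicE xS mulr1; case: ifPn => sI; by rewrite ?mul1r ?mul0r.
by rewrite integral0_eq // => s _; rewrite /f /= !indicE (negbTE xS) mulr0 mul0r.
Qed.


Definition h (a c t : R) : \bar R := (\int[mu]_(s in `[a, c]) (pq s t)%:E)%E.

Lemma mpq (t : R) (D : set (measurableTypeR R)) :
  measurable_fun D (fun s : measurableTypeR R => (pq s t)%:E).
Proof.
apply/measurable_EFinP; rewrite /pq; apply: measurable_funM.
  by apply: measurable_funM.
apply: measurableT_comp; first exact: measurable_expR.
apply: measurableT_comp; first exact: oppr_measurable.
exact: measurable_funM.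
Qed.

Lemma itv_ge0 {a c s : R} : 0 <= a -> (`[a, c]%classic : set R) s -> 0 <= s.
Proof.
move=> a0; rewrite /= in_itv /= => /andP[+ _]; exact: le_trans.
Qed.

Lemma h_ge0 a c t : 0 <= a -> (0 <= h a c t)%E.
Proof.
move=> a0; apply: integral_ge0 => s sI; rewrite lee_fin pq_ge0 //.
move: sI; rewrite /= in_itv /= => /andP[+ _]; exact: le_trans.
Qed.

Lemma h_mono a c t1 t2 : 0 <= a -> t1 <= t2 -> (h a c t2 <= h a c t1)%E.
Proof.
move=> a0 t12; apply: ge0_le_integral => //.
- by move=> s sI; rewrite lee_fin pq_ge0 // (itv_ge0 a0 sI).
- exact: mpq.
- exact: mpq.
- move=> s sI; have s0 : 0 <= s by exact: (itv_ge0 a0 sI).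
  rewrite lee_fin /pq ler_wpM2l ?divr_ge0 // ler_expR lerN2.
  by rewrite ler_wpM2l.
Qed.


Lemma key s u t D : 0 <= s -> 0 <= u -> 0 <= t -> 0 <= D ->
  pq u D * pq s t + pq u t * pq s D <=
  pq u (t + D) * pq s 0 + pq u 0 * pq s (t + D).
Proof.
move=> s0 u0 t0 D0; rewrite /pq !mulr0 oppr0 expR0 !mulrDr !opprD !expRD.
set X := expR (- (s * t)); set Y := expR (- (u * t)).
set P := expR (- (s * D)); set Q := expR (- (u * D)).
have W0 : 0 <= u / 2 * (s / 2) by rewrite mulr_ge0 ?divr_ge0.
have H : 0 <= (X - Y) * (P - Q).
  have [su|us] := leP s u.
    apply: mulr_ge0; rewrite subr_ge0 ler_expR lerN2.
      by rewrite ler_wpM2r.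
    by rewrite ler_wpM2r.
  rewrite -mulrNN; apply: mulr_ge0; rewrite oppr_ge0 subr_le0 ler_expR lerN2.
    by rewrite ler_wpM2r // ltW.
  by rewrite ler_wpM2r // ltW.
have := mulr_ge0 W0 H.
nra.
Qed.

Lemma ee_half (x y : \bar R) : (x + x <= y + y)%E -> (x <= y)%E.
Proof.
case: x => [x| |]; case: y => [y| |] //= H; rewrite ?leey ?leNye //.
by move: H; rewrite -?EFinD !lee_fin; lra.
Qed.


Lemma prodZl a c t (k : \bar R) : 0 <= a -> (0 <= k)%E ->
  (k * h a c t = \int[mu]_(s in `[a, c]) (k * (pq s t)%:E))%E.
Proof.
move=> a0 k0; rewrite /h ge0_integralZl //; first exact: mpq.
by move=> s sI; rewrite lee_fin pq_ge0 // (itv_ge0 a0 sI).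
Qed.

Lemma prodZr a c t (k : \bar R) : 0 <= a -> (0 <= k)%E ->
  (h a c t * k = \int[mu]_(s in `[a, c]) ((pq s t)%:E * k))%E.
Proof.
move=> a0 k0; rewrite /h ge0_integralZr //; first exact: mpq.
by move=> s sI; rewrite lee_fin pq_ge0 // (itv_ge0 a0 sI).
Qed.

Lemma cheb a c t D : 0 <= a -> 0 <= t -> 0 <= D ->
  (h a c t * h a c D <= h a c 0 * h a c (t + D))%E.
Proof.
move=> a0 t0 D0; apply: ee_half.
have hg := h_ge0 a c _ a0.
have mI : measurable (`[a, c]%classic : set (measurableTypeR R)).
  exact: measurable_itv.
have mk : forall k t', measurable_fun (`[a, c]%classic : set (measurableTypeR R))
    (fun s : measurableTypeR R => k * (pq s t')%:E)%E.
  by move=> k t'; apply: measurable_funeM; exact: mpq.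
have k0 : forall k t', (0 <= k)%E -> forall s : measurableTypeR R,
    `[a, c]%classic s -> (0 <= k * (pq s t')%:E)%E.
  by move=> k t' k0 s sI; rewrite mule_ge0 // lee_fin pq_ge0 // (itv_ge0 a0 sI).
rewrite {1}(muleC (h a c t)) (prodZl a c t (h a c D) a0 (hg D)).
rewrite (prodZl a c D (h a c t) a0 (hg t)).
rewrite {2}(muleC (h a c 0)) (prodZl a c (t + D) (h a c 0) a0 (hg 0)).
rewrite (prodZl a c 0 (h a c (t + D)) a0 (hg _)).
rewrite -(ge0_integralD mu mI (k0 _ t (hg D)) (mk _ _) (k0 _ D (hg t)) (mk _ _)).
rewrite -(ge0_integralD mu mI (k0 _ (t + D) (hg 0)) (mk _ _) (k0 _ 0 (hg (t + D))) (mk _ _)).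
apply: ge0_le_integral => //.
- by move=> s sI; rewrite adde_ge0 // k0.
- exact: emeasurable_funD.
- exact: emeasurable_funD.
move=> s sI; have s0 := itv_ge0 a0 sI.
have p0 : forall t', (0 <= (pq s t')%:E)%E by move=> t'; rewrite lee_fin pq_ge0.
rewrite (prodZr a c D _ a0 (p0 t)) (prodZr a c t _ a0 (p0 D)).
rewrite (prodZr a c 0 _ a0 (p0 (t + D))) (prodZr a c (t + D) _ a0 (p0 0)).
have mk' : forall t' t'', measurable_fun (`[a, c]%classic : set (measurableTypeR R))
    (fun u : measurableTypeR R => ((pq u t')%:E * (pq s t'')%:E))%E.
  move=> t' t''; apply/measurable_EFinP; apply: measurable_funM => //.
  by apply/measurable_EFinP; exact: mpq.
have k0' : forall t' t'' (u : measurableTypeR R),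
    `[a, c]%classic u -> (0 <= (pq u t')%:E * (pq s t'')%:E)%E.
  by move=> t' t'' u uI; rewrite mule_ge0 // lee_fin pq_ge0 // (itv_ge0 a0 uI).
rewrite -(ge0_integralD mu mI (k0' D t) (mk' _ _) (k0' t D) (mk' _ _)).
rewrite -(ge0_integralD mu mI (k0' 0 (t + D)) (mk' _ _) (k0' (t + D) 0) (mk' _ _)).
apply: ge0_le_integral => //.
- by move=> u uI; rewrite adde_ge0 // k0'.
- exact: emeasurable_funD.
- exact: emeasurable_funD.
move=> u uI; rewrite -!EFinM -!EFinD lee_fin.
rewrite [X in _ <= X]addrC; apply: key => //; exact: (itv_ge0 a0 uI).
Qed.


Lemma ftc_easy (f F : R -> R) (a c : R) : a < c -> continuous f ->
  (forall x : R, is_derive x (1 : R) F (f x)) ->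
  (\int[mu]_(x in `[a, c]) (f x)%:E = (F c - F a)%:E)%E.
Proof.
move=> ac cf dF.
have cF : forall x : R, {for x, continuous (F : R -> R)}.
  by move=> x; apply/differentiable_continuous/derivable1_diffP; exact: ex_derive.
rewrite (@continuous_FTC2 _ f F _ _ ac) ?EFinB //.
- by apply: continuous_in_subspaceT => x _; exact: cf.
- split.
  + by move=> x _; exact: ex_derive.
  + exact: cvg_at_right_filter (cF a).
  + exact: cvg_at_left_filter (cF c).
- by move=> x _; rewrite derive1E; exact: derive_val.
Qed.

Lemma pq_cont t : continuous (fun s => pq s t).
Proof.
have -> : (fun s => pq s t) = (id * cst (2^-1)) * (expR \o (- (id * cst t))).
  by apply/funext => s; rewrite /pq !fctE.
move=> x; apply/differentiable_continuous/derivable1_diffP; exact: ex_derive.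
Qed.

Definition FD (D : R) : R -> R :=
  (cst (- (2 * D ^+ 2)^-1)) * ((cst 1 + id * cst D) * (expR \o (- (id * cst D)))).

Lemma dFD (D x : R) : D != 0 -> is_derive x 1 (FD D) (pq x D).
Proof.
move=> D0; rewrite /FD; apply: is_derive_eq.
rewrite /pq /= !fctE !scaler0 ?add0r ?addr0 /GRing.scale /= ?mulr1 ?mulr0.
by field.
Qed.

Definition F0 : R -> R := cst (4^-1) * (id * id).

Lemma dF0 (x : R) : is_derive x 1 F0 (pq x 0).
Proof.
rewrite /F0; apply: is_derive_eq.
rewrite /pq /= !fctE !scaler0 ?add0r ?addr0 /GRing.scale /= ?mulr1 ?mulr0.
rewrite oppr0 expR0 mulr1; by field.
Qed.

Lemma h0E a c : a < c -> h a c 0 = ((c ^+ 2 - a ^+ 2) / 4)%:E.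
Proof.
move=> ac; rewrite /h (ftc_easy _ _ _ _ ac (pq_cont 0) dF0) /F0 !fctE /=.
congr EFin; rewrite /GRing.scale /=; by field.
Qed.

Lemma hDE a c D : a < c -> D != 0 -> h a c D =
  (((1 + a * D) * expR (- (a * D)) - (1 + c * D) * expR (- (c * D))) /
   (2 * D ^+ 2))%:E.
Proof.
move=> ac D0; rewrite /h (ftc_easy _ _ _ _ ac (pq_cont D) (fun x => dFD D x D0)) /FD !fctE /=.
congr EFin; rewrite /GRing.scale /=; by field.
Qed.


End Aux.

Section Aux2.
Context {R : realType}.
Local Notation mu := (@lebesgue_measure R).

Lemma mech_eq (a c : R) (ac : a < c) (a0 : 0 <= a) (m : R) (S : set R) :
  measurable S ->
  (\int[uniform_prob ac]_s laplace_shift_prob s^-1 m S =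
   ((c - a)^-1)%:E * \int[mu]_(x in S) h a c (`|x - m|)%R)%E.
Proof.
move=> mS.
transitivity (\int[uniform_prob ac]_s
    (\int[mu]_(x in S) (pq s `|x - m|)%:E))%E.
  apply: eq_integral => s _; rewrite /laplace_shift_prob.
  by apply: eq_integral => x _; rewrite pdfE.
have mF := param_meas (fun z => pq z.1 `|z.2 - m|) S mS (mjoint m).
have F0 : forall s, a <= s <= c ->
    (0 <= \int[mu]_(x in S) (pq s `|x - m|)%:E)%E.
  move=> s /andP[sa _]; apply: integral_ge0 => x _.
  by rewrite lee_fin pq_ge0 // (le_trans a0 sa).
rewrite (unif_int a c ac _ mF F0).
by rewrite (swap_int m a c S mS a0).
Qed.

Lemma Npos (a c D : R) : 0 <= a -> a < c -> 0 < D ->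
  0 < (1 + a * D) * expR (- (a * D)) - (1 + c * D) * expR (- (c * D)).
Proof.
move=> a0 ac D0.
have dpos : 0 < c * D - a * D by rewrite -mulrBl mulr_gt0 // subr_gt0.
have E := expR_gt1Dx (lt0r_neq0 dpos).
have eb : 0 < expR (- (c * D)) := expR_gt0 _.
have -> : expR (- (a * D)) = expR (c * D - a * D) * expR (- (c * D)).
  by rewrite -expRD; congr expR; ring.
have aD0 : 0 <= a * D by rewrite mulr_ge0 // ltW.
set E1 := expR (c * D - a * D) in E *.
set e2 := expR (- (c * D)) in eb *.
have -> : (1 + a * D) * (E1 * e2) - (1 + c * D) * e2 =
  e2 * ((1 + a * D) * (E1 - 1 - (c * D - a * D)) + a * D * (c * D - a * D)).
  by ring.
apply: mulr_gt0 => //; apply: ltr_pwDl.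
  by apply: mulr_gt0; [lra | lra].
by rewrite mulr_ge0 // ltW.
Qed.

Definition HDv (a c D : R) :=
  ((1 + a * D) * expR (- (a * D)) - (1 + c * D) * expR (- (c * D))) /
     (2 * D ^+ 2).

Lemma point (a c D t t' : R) : 0 <= a -> a < c -> 0 < D -> 0 <= t ->
  t' <= t + D ->
  (h a c t <= (((c ^+ 2 - a ^+ 2) / 4) / HDv a c D)%:E * h a c t')%E.
Proof.
move=> a0 ac D0 t0 tt'.
have HD0 : 0 < HDv a c D by rewrite /HDv divr_gt0 ?Npos // mulr_gt0 // exprn_gt0.
have H00 : 0 <= (c ^+ 2 - a ^+ 2) / 4.
  by apply: divr_ge0 => //; nra.
have := cheb a c t D a0 t0 (ltW D0).
rewrite (hDE a c D ac (lt0r_neq0 D0)) -/(HDv a c D) (h0E a c ac) => Hc.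
have : (h a c t * (HDv a c D)%:E <= ((c ^+ 2 - a ^+ 2) / 4)%:E * h a c t')%E.
  apply: le_trans Hc _; apply: lee_wpmul2l; first by rewrite lee_fin.
  exact: h_mono.
rewrite -lee_pdivlMr // => H; apply: le_trans H _.
by rewrite muleAC -EFinM.
Qed.

Lemma mjoint' (m : R) :
  measurable_fun setT (fun z : R * R => pq z.2 `|z.1 - m|).
Proof.
rewrite /pq; apply: measurable_funM.
  by apply: measurable_funM => //; exact: measurable_snd.
apply: measurableT_comp; first exact: measurable_expR.
apply: measurableT_comp; first exact: oppr_measurable.
apply: measurable_funM; first exact: measurable_snd.
apply: measurableT_comp; first exact: normr_measurable.
apply: measurable_funB => //; exact: measurable_fst.
Qed.

Lemma mh (a c m : R) : measurable_fun setT (fun x : R => h a c `|x - m|).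
Proof.
exact: (param_meas (fun z => pq z.2 `|z.1 - m|) _ (measurable_itv `[a, c]) (mjoint' m)).
Qed.

End Aux2.

Theorem theoremB4 (R : realType) (D : Type) (nbr : D -> D -> Prop)
  (q : D -> R) (dq : R) (a c : R) (ac : a < c) :
  is_sensitivity nbr q dq -> 0 < dq -> 0 <= a ->
  let alpha := a * dq in
  let beta := c * dq in
  differentially_private nbr
    (ln ((alpha ^+ 2 - beta ^+ 2) /
         (2 * ((1 + beta) * expR (- beta) - (1 + alpha) * expR (- alpha)))))
    (r2dp_uniform_laplace_prob ac q).
Proof.
move=> [Hs _] dq0 a0 alpha beta d d' ndd' S mS.
rewrite /r2dp_uniform_laplace_prob.
rewrite (mech_eq a c ac a0 (q d) S mS) (mech_eq a c ac a0 (q d') S mS).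
have NP := Npos a c dq a0 ac dq0.
have HD0 : 0 < HDv a c dq by rewrite /HDv divr_gt0 ?Npos // mulr_gt0 // exprn_gt0.
have H00 : 0 < (c ^+ 2 - a ^+ 2) / 4.
  by apply: divr_gt0 => //; nra.
have KE : (alpha ^+ 2 - beta ^+ 2) /
    (2 * ((1 + beta) * expR (- beta) - (1 + alpha) * expR (- alpha))) =
    ((c ^+ 2 - a ^+ 2) / 4) / HDv a c dq.
  rewrite /alpha /beta /HDv.
  set N := (1 + a * dq) * expR (- (a * dq)) - (1 + c * dq) * expR (- (c * dq)) in NP *.
  have -> : (1 + c * dq) * expR (- (c * dq)) - (1 + a * dq) * expR (- (a * dq)) = - N.
    by rewrite /N opprB.
  have N0 : N != 0 by rewrite gt_eqF.
  have d0 : dq != 0 by rewrite gt_eqF.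
  by field; rewrite d0 N0.
rewrite KE lnK; last by rewrite posrE divr_gt0.
rewrite muleCA; apply: lee_wpmul2l.
  by rewrite lee_fin invr_ge0 ltW // subr_gt0.
rewrite -ge0_integralZl //; last first.
- by rewrite lee_fin ltW // divr_gt0.
- by move=> x _; exact: h_ge0.
- exact: measurable_funS (mh a c (q d')).
apply: ge0_le_integral => //.
- by move=> x _; exact: h_ge0.
- exact: measurable_funS (mh a c (q d)).
- apply: measurable_funeM; exact: measurable_funS (mh a c (q d')).
move=> x _; apply: point => //.
apply: le_trans (ler_distD (q d) x (q d')) _.
by rewrite lerD2l; exact: Hs.
Qed.
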